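(* Suppose $\eta_jL<1$. For the biased batched SVRG (Algorithm 3), $$(1-\lambda)\big(1-(1-\lambda)L\eta_j\big)\eta_jB_j\,\mathbb{E}\|\nabla f(\tilde x_j)\|^2+\eta_jB_j\,\mathbb{E}\langle e_j,\nabla f(\tilde x_j)\rangle\le b_j\,\mathbb{E}\big(f(\tilde x_{j-1})-f(\tilde x_j)\big)+\frac{(1-\lambda)^2\eta_j^2B_jL^3}{2b_j}\mathbb{E}\|\tilde x_j-\tilde x_{j-1}\|^2+L\eta_j^2B_j\,\mathbb{E}\|e_j\|^2.$$
   Context: Setting: $f(x)=\frac1n\sum_{i=1}^n f_i(x)$ with each $f_i:\mathbb{R}^d\to\mathbb{R}$ differentiable and $L$-smooth: $\|\nabla f_i(x)-\nabla f_i(y)\|\le L\|x-y\|$. For $\mathcal I\subset\{1,\dots,n\}$, $\nabla f_{\mathcal I}(x)=\frac1{|\mathcal I|}\sum_{i\in\mathcal I}\nabla f_i(x)$. $N\sim\mathrm{Geom}(\gamma')$ means $P(N=k)=(1-\gamma')\gamma'^k$, $k\ge0$. Epoch $j$ of the batched SVRG scheme: $\mathcal I_j$ uniformly random of size $B_j$, $g_j=\nabla f_{\mathcal I_j}(\tilde x_{j-1})$, $x^{(j)}_0=\tilde x_{j-1}$; $N_j\sim\mathrm{Geom}(B_j/(B_j+b_j))$ drawn independently (mean $B_j/b_j$); for $k=0,\dots,N_j-1$, $\tilde{\mathcal I}_k$ uniformly random of size $b_j$ and $x^{(j)}_{k+1}=x^{(j)}_k-\eta_jv^{(j)}_k$;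 $\tilde x_j=x^{(j)}_{N_j}$. Algorithm 3 (biased, $0<\lambda<1$): $v^{(j)}_k=(1-\lambda)(\nabla f_{\tilde{\mathcal I}_k}(x^{(j)}_k)-\nabla f_{\tilde{\mathcal I}_k}(x^{(j)}_0))+\lambda g_j$, and $e_j=\lambda\nabla f_{\mathcal I_j}(\tilde x_{j-1})-(1-\lambda)\nabla f(\tilde x_{j-1})$. $\mathbb{E}$ is expectation over all randomness. *)

(* Defs.v *)
From HB Require Import structures.
From mathcomp Require Import all_boot all_order all_algebra.
From mathcomp Require Import all_classical all_reals all_analysis.
Set Implicit Arguments. Unset Strict Implicit. Unset Printing Implicit Defensive.
Import Order.TTheory GRing.Theory Num.Theory.
Import numFieldNormedType.Exports.
Local Open Scope ring_scope.

Section SVRG.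
Variables (R : realType) (n d : nat).
Notation V := 'rV[R]_d.

(* Euclidean inner product and norms on R^d (the built-in matrix norm is
   the max norm, so we use our own Euclidean ones). *)
Definition dotv (u v : V) : R := (u *m v^T) 0 0.
Definition enorm2 (u : V) : R := dotv u u.
Definition enorm (u : V) : R := Num.sqrt (dotv u u).

Definition favg (f : 'I_n -> V -> R) (x : V) : R := n%:R^-1 * \sum_(i < n) f i x.
Definition gradI (g : 'I_n -> V -> V) (I : {set 'I_n}) (x : V) : V :=
  #|I|%:R^-1 *: \sum_(i in I) g i x.
Definition gradf (g : 'I_n -> V -> V) (x : V) : V := gradI g [set: 'I_n] x.

Definition is_gradient (f : 'I_n -> V -> R) (g : 'I_n -> V -> V) :=
  forall i x, differentiable (f i) x /\ forall h, 'd (f i) x h = dotv (g i x) h.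
Definition Lsmooth (g : 'I_n -> V -> V) (L : R) :=
  forall i x y, enorm (g i x - g i y) <= L * enorm (x - y).

(* Inner loop of epoch j of Algorithm 3, started at x0 = tilde x_{j-1}, with
   gI = g_j = grad f_{I_j}(x0) and inner minibatches s 0, s 1, ... :
   x_{k+1} = x_k - eta * ((1-lam)(grad f_{s k}(x_k) - grad f_{s k}(x0)) + lam gI). *)
Fixpoint svrg_iter (g : 'I_n -> V -> V) (lam eta : R) (x0 gI : V)
    (s : nat -> {set 'I_n}) (k : nat) : V :=
  match k with
  | 0 => x0
  | k'.+1 =>
      let x := svrg_iter g lam eta x0 gI s k' in
      x - eta *: ((1 - lam) *: (gradI g (s k') x - gradI g (s k') x0) + lam *: gI)
  end.

Definition avg (T : finType) (A : {set T}) (F : T -> R) : R :=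
  #|A|%:R^-1 * \sum_(x in A) F x.

Definition subsets (m : nat) : {set {set 'I_n}} := [set S : {set 'I_n} | #|S| == m].
Definition batches (m k : nat) : {set {ffun 'I_k -> {set 'I_n}}} :=
  [set F : {ffun 'I_k -> {set 'I_n}} | [forall i, #|F i| == m]].
Definition ext_batches (k : nat) (F : {ffun 'I_k -> {set 'I_n}}) : nat -> {set 'I_n} :=
  fun i => if insub i is Some j then F j else (finset.set0 : {set 'I_n}).

(* P(N = k) for N ~ Geom(B/(B+b)) : (1 - g') g'^k *)
Definition geomp (B b : nat) (k : nat) : R :=
  (1 - B%:R / (B + b)%:R) * (B%:R / (B + b)%:R) ^+ k.

(* Expectation over the randomness of the epoch (I_j uniform of size B,
   N_j ~ Geom(B/(B+b)), inner minibatches i.i.d. uniform of size b, all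
   independent), of a quantity F I N s. *)
Definition Eepoch (B b : nat) (F : {set 'I_n} -> nat -> (nat -> {set 'I_n}) -> R) : R :=
  avg (subsets B) (fun I =>
    limn (series (fun k => geomp B b k * avg (batches b k) (fun s => F I k (ext_batches s))))).

(* The expectation is finite (absolute summability). *)
Definition Eint (B b : nat) (F : {set 'I_n} -> nat -> (nat -> {set 'I_n}) -> R) : Prop :=
  forall I, I \in subsets B ->
    cvgn (series (fun k => geomp B b k * avg (batches b k) (fun s => `|F I k (ext_batches s)|))).

End SVRG.

(* Main.v *)
Require Import Defs.
From HB Require Import structures.
From mathcomp Require Import all_boot all_order all_algebra.
From mathcomp Require Import all_classical all_reals all_analysis.
Import Order.TTheory GRing.Theory Num.Theory.
Local Open Scope ring_scope.
Set Implicit Arguments. Unset Strict Implicit. Unset Printing Implicit Defensive.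
From mathcomp Require Import ring lra.
Import numFieldNormedType.Exports.
Section A.
Context {R : realType} {d : nat}.
Implicit Types (u v w : 'rV[R]_d).

Lemma dotvE u v : dotv u v = \sum_(j < d) u 0 j * v 0 j.
Proof. by rewrite /dotv !mxE; apply: eq_bigr => j _; rewrite mxE. Qed.

Lemma dotvC u v : dotv u v = dotv v u.
Proof. by rewrite !dotvE; apply: eq_bigr => j _; rewrite mulrC. Qed.

Lemma dotvDl u v w : dotv (u + v) w = dotv u w + dotv v w.
Proof. by rewrite !dotvE -big_split; apply: eq_bigr => j _; rewrite mxE mulrDl. Qed.

Lemma dotvZl (a : R) u v : dotv (a *: u) v = a * dotv u v.
Proof. by rewrite !dotvE mulr_sumr; apply: eq_bigr => j _; rewrite mxE mulrA. Qed.

Lemma dotv0l v : dotv 0 v = 0.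
Proof. by rewrite dotvE big1 // => j _; rewrite mxE mul0r. Qed.

Lemma dotvNl u v : dotv (- u) v = - dotv u v.
Proof. by rewrite -scaleN1r dotvZl mulN1r. Qed.

Lemma dotvBl u v w : dotv (u - v) w = dotv u w - dotv v w.
Proof. by rewrite dotvDl dotvNl. Qed.

Lemma dotvDr u v w : dotv u (v + w) = dotv u v + dotv u w.
Proof. by rewrite dotvC dotvDl !(dotvC u). Qed.
Lemma dotvZr (a : R) u v : dotv u (a *: v) = a * dotv u v.
Proof. by rewrite dotvC dotvZl dotvC. Qed.
Lemma dotvBr u v w : dotv u (v - w) = dotv u v - dotv u w.
Proof. by rewrite dotvC dotvBl !(dotvC u). Qed.
Lemma dotv0r v : dotv v 0 = 0.
Proof. by rewrite dotvC dotv0l. Qed.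

Lemma dotv_suml (I : finType) (P : pred I) (F : I -> 'rV[R]_d) v :
  dotv (\sum_(i | P i) F i) v = \sum_(i | P i) dotv (F i) v.
Proof. exact: (big_morph (fun u => dotv u v) (fun a b => dotvDl a b v) (dotv0l v)). Qed.

Lemma dotv_sumr (I : finType) (P : pred I) (F : I -> 'rV[R]_d) v :
  dotv v (\sum_(i | P i) F i) = \sum_(i | P i) dotv v (F i).
Proof. by rewrite dotvC dotv_suml; apply: eq_bigr => i _; rewrite dotvC. Qed.

Lemma enorm2_ge0 u : 0 <= enorm2 u.
Proof. by rewrite /enorm2 dotvE sumr_ge0 // => j _; rewrite -expr2 sqr_ge0. Qed.

Lemma enorm2_eq0 u : enorm2 u = 0 -> u = 0.
Proof.
rewrite /enorm2 dotvE => /eqP; rewrite psumr_eq0; last by move=> j _; rewrite -expr2 sqr_ge0.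
move/allP => H; apply/rowP => j; rewrite mxE; apply/eqP.
by have := H j (mem_index_enum j); rewrite /= mulf_eq0 orbb.
Qed.

Lemma enorm2D u v : enorm2 (u + v) = enorm2 u + 2 * dotv u v + enorm2 v.
Proof. rewrite /enorm2 !dotvDl !dotvDr (dotvC v u); ring. Qed.

Lemma enorm2B u v : enorm2 (u - v) = enorm2 u - 2 * dotv u v + enorm2 v.
Proof. rewrite /enorm2 !dotvBl !dotvBr (dotvC v u); ring. Qed.

Lemma enorm2Z (a : R) u : enorm2 (a *: u) = a ^+ 2 * enorm2 u.
Proof. by rewrite /enorm2 dotvZl dotvZr mulrA expr2. Qed.

Lemma enormE u : enorm u = Num.sqrt (enorm2 u).
Proof. by []. Qed.

Lemma dotv_le u v : 2 * dotv u v <= enorm2 u + enorm2 v.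
Proof. have := enorm2_ge0 (u - v); rewrite enorm2B; lra. Qed.

End A.

Section B.
Context {R : realType} {n d : nat} (f : 'I_n -> 'rV[R]_d -> R) (g : 'I_n -> 'rV[R]_d -> 'rV[R]_d) (L : R).
Hypothesis gradfg : is_gradient f g.
Hypothesis smooth : Lsmooth g L.

Lemma sm_sq i x y : enorm2 (g i x - g i y) <= L ^+ 2 * enorm2 (x - y).
Proof.
have := smooth i x y; rewrite !enormE.
have ha := enorm2_ge0 (g i x - g i y); have hc := enorm2_ge0 (x - y).
have sa := sqr_sqrtr ha; have sc := sqr_sqrtr hc.
have sa0 := sqrtr_ge0 (enorm2 (g i x - g i y)); have sc0 := sqrtr_ge0 (enorm2 (x - y)).
move: sa sc sa0 sc0; set a := enorm2 _; set c := enorm2 _; set p := Num.sqrt a; set q := Num.sqrt c.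
move=> sa sc sa0 sc0 h.
rewrite -sa -sc; nra.
Qed.

Lemma sm_dot i x y : dotv (g i x - g i y) (x - y) <= L * enorm2 (x - y).
Proof.
set a := g i x - g i y; set b := x - y.
have hsq := sm_sq i x y; rewrite -/a -/b in hsq.
have h0 := enorm2_ge0 (a - L *: b); rewrite enorm2B dotvZr enorm2Z in h0.
case: (ltrgtP L 0) => hL.
- have := smooth i x y; rewrite !enormE -/a -/b => h.
  have sa0 := sqrtr_ge0 (enorm2 a); have sc0 := sqrtr_ge0 (enorm2 b).
  have : Num.sqrt (enorm2 b) = 0 by nra.
  move/eqP; rewrite sqrtr_eq0 => hb.
  have hb0 : enorm2 b = 0 by apply/le_anti; rewrite hb enorm2_ge0.
  by rewrite hb0 mulr0 (enorm2_eq0 hb0) dotv0r.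
- have : 2 * L * dotv a b <= 2 * L * (L * enorm2 b) by nra.
  by rewrite -!mulrA ler_pM2l ?mulr_gt0 // ler_pM2l.
- move: hsq; rewrite hL expr0n /= mul0r => hsq.
  have ha0 : enorm2 a = 0 by apply/le_anti; rewrite hsq enorm2_ge0.
  by rewrite (enorm2_eq0 ha0) dotv0l.
Qed.

Lemma phi_derive (i : 'I_n) (x h : 'rV[R]_d) (t : R) :
  is_derive t (1 : R) (fun s : R => f i (x + s *: h)) (dotv (g i (x + t *: h)) h).
Proof.
have [dif dd] := gradfg i (x + t *: h).
have dv := @diff_derivable _ _ _ (f i) (x + t *: h) h dif.
have E : (fun s : R => s^-1 *: (((fun s : R => f i (x + s *: h)) \o shift t) (s *: 1)
             - f i (x + t *: h))) =
         (fun s : R => s^-1 *: ((f i \o shift (x + t *: h)) (s *: h) - f i (x + t *: h))).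
  apply: funext => s /=.
  congr (_ *: (f i _ - _)).
  by rewrite scalerDl [s%:A]mulr1 addrCA.
apply: DeriveDef.
  by rewrite /derivable E.
by rewrite /derive E -/(derive _ _ _) deriveE // dd.
Qed.

Local Open Scope classical_set_scope.
Lemma descent (i : 'I_n) (x h : 'rV[R]_d) :
  f i (x + h) <= f i x + dotv (g i x) h + L / 2 * enorm2 h.
Proof.
set K := dotv (g i x) h; set M := L / 2 * enorm2 h.
pose phi := fun s : R => f i (x + s *: h).
pose psi := phi - (K \*: id) - (M \*: (id ^+ 2)).
pose df := fun t : R => dotv (g i (x + t *: h)) h - K *: (1:R) - M *: ((2%:R * t ^+ 1) *: (1:R)).
have dpsi t : is_derive t (1:R) psi (df t).
  exact: (is_deriveB (is_deriveB (phi_derive i x h t) (is_deriveZ K (is_derive_id t (1:R))))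
      (is_deriveZ M (is_deriveX 2 (is_derive_id t (1:R))))).
have cpsi : {within `[0%R, 1%R], continuous psi}.
  by apply: derivable_within_continuous => t _; case: (dpsi t).
have [c c01 hc] := MVT ltr01 (fun t _ => dpsi t) cpsi.
have c0 : 0 < c by move: c01; rewrite in_itv /= => /andP[].
have hdf : df c <= 0.
  have := sm_dot i (x + c *: h) x.
  rewrite addrAC subrr add0r dotvZr enorm2Z /df dotvBl.
  rewrite /K /M => H.
  have e1 : forall k : R, k%:A = k := fun k => mulr1 k.
  have e2 : forall a b : R, a *: b = a * b := fun a b => erefl.
  rewrite !e1 e2 expr1.
  nra.
have ev : forall t, psi t = f i (x + t *: h) - K * t - M * (t * t).
  by move=> t.
move: hc; rewrite subr0 mulr1 !ev scale1r scale0r addr0 !mulr1 !mulr0 !subr0 => hc.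
have : f i (x + h) - K - M - f i x <= 0 by rewrite hc.
lra.
Qed.

End B.
Lemma card_sup (T : finType) (P : {set T}) k : (#|P| <= k)%N ->
  #|[set S : {set T} | P \subset S & #|S| == k]| = 'C(#|T| - #|P|, k - #|P|).
Proof.
move=> Pk.
have -> : (#|T| - #|P| = #|~: P|)%N by rewrite -(cardsC P) addKn.
rewrite -cards_draws.
rewrite -[RHS](@card_in_imset _ _ (fun A => A :|: P)); last first.
  move=> A1 A2; rewrite !inE => /andP[/fintype.subsetP h1 _] /andP[/fintype.subsetP h2 _] e.
  apply/setP => x; have := congr1 (fun X : {set T} => x \in X) e; rewrite /= !inE.
  case xP: (x \in P); last by rewrite !orbF.
  have H1 := h1 x; have H2 := h2 x; rewrite !inE xP /= in H1 H2 => _.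
  by apply/idP/idP => [/H1|/H2].
apply: eq_card => S; rewrite !inE; apply/andP/imsetP.
- move=> [PS /eqP cS]; exists (S :\: P).
    rewrite inE; apply/andP; split.
      by apply/fintype.subsetP => x; rewrite !inE => /andP[].
    by rewrite cardsD (finset.setIidPr PS) cS.
  apply/setP => x; rewrite !inE; case xP: (x \in P); rewrite ?orbT ?orbF //=.
  by move/fintype.subsetP: PS => /(_ x); rewrite xP => ->.
- move=> [A]; rewrite inE => /andP[AP /eqP cA] ->; split; first exact: finset.subsetUr.
  rewrite cardsU cA.
  have -> : A :&: P = finset.set0.
    apply/setP => x; rewrite !inE; move/fintype.subsetP: AP => /(_ x); rewrite !inE.
    by case: (x \in A) => //; case: (x \in P) => // /(_ isT).
  by rewrite cards0 subn0 subnK.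
Qed.

Lemma cnt1 (n b : nat) (i : 'I_n) : (0 < b)%N ->
  (n * #|[set S : {set 'I_n} | (S \in subsets n b) && (i \in S)]|)%N = (b * 'C(n, b))%N.
Proof.
move=> b0.
have -> : [set S : {set 'I_n} | (S \in subsets n b) && (i \in S)] =
          [set S : {set 'I_n} | [set i] \subset S & #|S| == b].
  by apply/setP => S; rewrite !inE finset.sub1set andbC.
rewrite card_sup cards1 ?card_ord //.
case: b b0 => // b _; rewrite subn1 /= subSS subn0.
by rewrite mul_bin_diag.
Qed.

Lemma cnt2 (n b : nat) (i j : 'I_n) : (0 < b)%N -> i != j ->
  (n * (n - 1) * #|[set S : {set 'I_n} | [&& S \in subsets n b, i \in S & j \in S]]|)%N
   = (b * (b - 1) * 'C(n, b))%N.
Proof.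
move=> b0 ij.
have -> : [set S : {set 'I_n} | [&& S \in subsets n b, i \in S & j \in S]] =
          [set S : {set 'I_n} | [set i; j] \subset S & #|S| == b].
  apply/setP => S; rewrite !inE finset.subUset !finset.sub1set.
  by case: (_ \in _); case: (_ \in _); case: (_ == _).
have c2 : #|[set i; j]| = 2 by rewrite cards2 ij.
case: b b0 => // -[|b] _.
  rewrite muln0 mul0n; apply/eqP; rewrite muln_eq0 cards_eq0; apply/orP; right.
  apply/eqP/setP => S; rewrite !inE; apply/negbTE/negP => /andP[sub /eqP c1].
  by have := subset_leq_card sub; rewrite c2 c1.
rewrite card_sup c2 ?card_ord //.
rewrite !subSS subn0 subn1 /=.
clear c2; case: n i j ij => [[]//|[|n]] i j ij.
  by case: i j ij => [[]//] ? [[]//].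
rewrite (_ : (n.+2 - 2 = n)%N); last by rewrite !subSS subn0.
have h1 := mul_bin_diag n.+1 b; have h2 := mul_bin_diag n.+2 b.+1; simpl in h1, h2.
by rewrite -mulnA h1 mulnCA h2 mulnCA mulnA.
Qed.

Section Avg.
Context {R : realType} {T : finType}.
Implicit Types (A : {set T}) (F G : T -> R).

Lemma avgD A F G : avg A (fun x => F x + G x) = avg A F + avg A G.
Proof. by rewrite /avg big_split mulrDr. Qed.
Lemma avgZ A (c : R) F : avg A (fun x => c * F x) = c * avg A F.
Proof. by rewrite /avg -mulr_sumr mulrCA. Qed.
Lemma avgN A F : avg A (fun x => - F x) = - avg A F.
Proof. by rewrite /avg sumrN mulrN. Qed.
Lemma avgB A F G : avg A (fun x => F x - G x) = avg A F - avg A G.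
Proof. by rewrite avgD avgN. Qed.
Lemma avg_cst A (c : R) : (0 < #|A|)%N -> avg A (fun _ => c) = c.
Proof.
move=> A0; rewrite /avg sumr_const -[c *+ _]mulr_natl mulrA mulVf ?mul1r //.
by rewrite pnatr_eq0 -lt0n.
Qed.
Lemma avg_eq A F G : (forall x, x \in A -> F x = G x) -> avg A F = avg A G.
Proof. by move=> h; rewrite /avg; congr (_ * _); apply: eq_bigr. Qed.
Lemma ler_avg A F G : (forall x, x \in A -> F x <= G x) -> avg A F <= avg A G.
Proof.
move=> h; rewrite /avg ler_wpM2l ?invr_ge0 ?ler0n //.
by apply: ler_sum => x /h.
Qed.
Lemma avg_ge0 A F : (forall x, x \in A -> 0 <= F x) -> 0 <= avg A F.
Proof.
move=> h; rewrite /avg mulr_ge0 ?invr_ge0 ?ler0n //.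
by apply: sumr_ge0 => x /h.
Qed.
Lemma avg_norm A F : `|avg A F| <= avg A (fun x => `|F x|).
Proof.
rewrite /avg normrM ger0_norm ?invr_ge0 ?ler0n // ler_wpM2l ?invr_ge0 ?ler0n //.
exact: ler_norm_sum.
Qed.
End Avg.

Lemma sum_setT {R : realType} {T : finType} (F : T -> R) : \sum_(i in [set: T]) F i = \sum_i F i.
Proof. by apply: eq_bigl => i; rewrite finset.in_setT. Qed.
Lemma vsum_setT {R : realType} {d : nat} {T : finType} (F : T -> 'rV[R]_d) : \sum_(i in [set: T]) F i = \sum_i F i.
Proof. by apply: eq_bigl => i; rewrite finset.in_setT. Qed.

Definition mean {R : realType} {n d : nat} (S : {set 'I_n}) (del : 'I_n -> 'rV[R]_d) : 'rV[R]_d :=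
  #|S|%:R^-1 *: \sum_(i in S) del i.

Section Moments.
Context {R : realType} {n d b : nat}.
Hypothesis b0 : (0 < b)%N.
Hypothesis bn : (b <= n)%N.
Local Notation Sb := (subsets n b).

Lemma cardSb : #|Sb| = 'C(n, b).
Proof. by rewrite /subsets card_draws card_ord. Qed.

Lemma cardSb_gt0 : (0 < #|Sb|)%N.
Proof. by rewrite cardSb bin_gt0. Qed.

Lemma n0 : (0 < n)%N.
Proof. exact: leq_trans b0 bn. Qed.

Lemma sum_ind (P : {set 'I_n} -> bool) :
  \sum_(S in Sb) ((P S)%:R : R) = (#|[set S : {set 'I_n} | (S \in Sb) && P S]|)%:R.
Proof.
transitivity (\sum_(S in [set S : {set 'I_n} | (S \in Sb) && P S]) (1:R)); last by rewrite sumr_const.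
rewrite big_mkcond [RHS]big_mkcond /=.
by apply: eq_bigr => S _; rewrite [in RHS]inE; case: (S \in Sb); case: (P S).
Qed.

Lemma sum_in (S : {set 'I_n}) (F : 'I_n -> R) :
  \sum_(i in S) F i = \sum_i (i \in S)%:R * F i.
Proof. by rewrite big_mkcond; apply: eq_bigr => i _; case: (i \in S); rewrite ?mul1r ?mul0r. Qed.

Lemma N1E (i : 'I_n) :
  (#|[set S : {set 'I_n} | (S \in Sb) && (i \in S)]|)%:R = (b%:R * 'C(n, b)%:R / n%:R : R).
Proof.
have := cnt1 i b0; move/(congr1 (fun m => m%:R : R)); rewrite !natrM => h.
have nz : (n%:R : R) != 0 by rewrite pnatr_eq0 -lt0n n0.
by rewrite -h mulrC mulrA mulVf ?mul1r.
Qed.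

Lemma mom1 (del : 'I_n -> 'rV[R]_d) (w : 'rV[R]_d) :
  avg Sb (fun S => dotv (mean S del) w) = dotv (mean [set: 'I_n] del) w.
Proof.
rewrite (@avg_eq _ _ _ _ (fun S : {set 'I_n} => b%:R^-1 * \sum_(i : 'I_n) (i \in S)%:R * dotv (del i) w)); last first.
  move=> S; rewrite inE => /eqP cS; rewrite /mean dotvZl dotv_suml cS; congr (_ * _).
  exact: sum_in.
rewrite avgZ /avg cardSb.
rewrite exchange_big /=.
under eq_bigr do rewrite -mulr_suml sum_ind N1E.
rewrite /mean cardsT card_ord dotvZl dotv_suml sum_setT mulr_sumr mulr_sumr mulr_sumr.
apply: eq_bigr => i _.
have nzC : ('C(n, b)%:R : R) != 0 by rewrite pnatr_eq0 -lt0n bin_gt0.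
have nzb : (b%:R : R) != 0 by rewrite pnatr_eq0 -lt0n.
field; by rewrite nzC nzb pnatr_eq0 -lt0n n0.
Qed.


Lemma sum_pred1 (i : 'I_n) (F : 'I_n -> R) : \sum_j ((i == j)%:R * F j) = F i.
Proof.
rewrite (bigD1 i) //= eqxx mul1r big1 ?addr0 // => j ji.
by rewrite eq_sym (negbTE ji) mul0r.
Qed.

Lemma enorm2_mean (S : {set 'I_n}) (del : 'I_n -> 'rV[R]_d) :
  enorm2 (mean S del) = #|S|%:R^-2 * \sum_i \sum_j ((i \in S)%:R * (j \in S)%:R * dotv (del i) (del j)).
Proof.
rewrite /mean enorm2Z /enorm2 dotv_suml sum_in; congr (_ * _); first by rewrite exprVn.
apply: eq_bigr => i _; rewrite dotv_sumr sum_in mulr_sumr; apply: eq_bigr => j _.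
by rewrite mulrA.
Qed.

Lemma mom2 (del : 'I_n -> 'rV[R]_d) :
  avg Sb (fun S => enorm2 (mean S del)) <=
  enorm2 (mean [set: 'I_n] del) + (b%:R * n%:R)^-1 * \sum_i enorm2 (del i).
Proof.
set C : R := 'C(n, b)%:R.
set M := fun i j => dotv (del i) (del j).
set T := \sum_i \sum_j M i j.
set Sg := \sum_i enorm2 (del i).
set N1 : R := b%:R * C / n%:R.
set N2 : R := b%:R * (b%:R - 1) * C / (n%:R * (n%:R - 1)).
have hC : 0 < C by rewrite ltr0n bin_gt0.
have hb : 1 <= (b%:R : R) by rewrite ler1n.
have hn : (b%:R : R) <= n%:R by rewrite ler_nat.
have cij : forall i j : 'I_n, (#|[set S : {set 'I_n} | (S \in Sb) && ((i \in S) && (j \in S))]|)%:R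
    = N2 + (i == j)%:R * (N1 - N2).
  move=> i j; case: (eqVneq i j) => [<-|ij].
    rewrite mul1r addrC subrK /N1 -(N1E i); congr (_%:R); apply: eq_card => S.
    by rewrite !inE andbb.
  rewrite mul0r addr0.
  have n2 : (1 < n)%N.
    move: i j ij; case: (n) => [[]//|[|m]] i j; last by [].
    by rewrite !ord1 eqxx.
  have := cnt2 b0 ij; move/(congr1 (fun m => m%:R : R)); rewrite !natrM !natrB //; last by apply: ltnW.
  rewrite -/C => h.
  have nz : (n%:R * (n%:R - 1) : R) != 0.
    rewrite mulf_eq0 negb_or pnatr_eq0 -lt0n n0 /= subr_eq0 pnatr_eq1.
    by case: (n) n2 => [|[|]].
  by rewrite /N2 -h mulrC mulrA mulVf ?mul1r.
rewrite (@avg_eq _ _ _ _ (fun S : {set 'I_n} => b%:R^-2 * \sum_i \sum_j ((i \in S)%:R * (j \in S)%:R * M i j))); last first.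
  by move=> S; rewrite inE => /eqP cS; rewrite enorm2_mean cS.
rewrite avgZ /avg cardSb -/C.
rewrite exchange_big /=.
have E1 : \sum_i \sum_(S in Sb) \sum_j (((i \in S)%:R * (j \in S)%:R * M i j) : R) = N2 * T + (N1 - N2) * Sg.
  rewrite /T /Sg mulr_sumr mulr_sumr -big_split /=; apply: eq_bigr => i _.
  rewrite exchange_big /=.
  under eq_bigr => j _ do rewrite -mulr_suml.
  have -> : \sum_j (\sum_(S in Sb) ((i \in S)%:R * (j \in S)%:R : R)) * M i j
       = \sum_j (N2 + (i == j)%:R * (N1 - N2)) * M i j.
    apply: eq_bigr => j _; rewrite -cij -sum_ind; congr (_ * _); apply: eq_bigr => S _.
    by case: (i \in S); case: (j \in S); rewrite ?mulr1 ?mulr0.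
  rewrite (eq_bigr (fun j => N2 * M i j + (i == j)%:R * ((N1 - N2) * M i j))); last first.
    by move=> j _; rewrite mulrDl mulrA.
  by rewrite big_split /= -mulr_sumr sum_pred1.
rewrite E1.
have -> : enorm2 (mean [set: 'I_n] del) = n%:R^-2 * T.
  rewrite /mean enorm2Z cardsT card_ord vsum_setT /T /enorm2 dotv_suml; congr (_ * _); first by rewrite exprVn.
  by apply: eq_bigr => i _; rewrite dotv_sumr.
have hT : 0 <= T.
  have := enorm2_ge0 (\sum_i del i); rewrite /enorm2 dotv_suml /T.
  by under eq_bigr => i _ do rewrite dotv_sumr.
have hS : 0 <= Sg by apply: sumr_ge0 => i _; apply: enorm2_ge0.
have hN2 : 0 <= N2.
  have hn1 : (1 : R) <= n%:R by lra.
  apply: divr_ge0; last by apply: mulr_ge0; [rewrite ler0n | rewrite subr_ge0].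
  apply: mulr_ge0; last exact: ltW.
  by apply: mulr_ge0; [rewrite ler0n | rewrite subr_ge0].
have hN2' : N2 * n%:R ^+ 2 <= b%:R ^+ 2 * C.
  case: (ltnP 1 n) => n2.
    have hn2 : (1 : R) < n%:R by rewrite ltr1n.
    rewrite /N2 mulrAC ler_pdivrMr; last by rewrite mulr_gt0 ?subr_gt0 // (lt_trans ltr01).
    have h : 0 <= b%:R * C * n%:R * (n%:R - b%:R).
      by rewrite !mulr_ge0 ?ler0n ?subr_ge0 // ltW.
    rewrite -subr_ge0; apply: (le_trans h); rewrite le_eqVlt; apply/orP; left; apply/eqP.
    ring.
  have -> : N2 = 0.
    have n1 : n = 1%N by apply/eqP; rewrite eqn_leq n2 n0.
    by rewrite /N2 n1 subrr mulr0 invr0 mulr0.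
  by rewrite mul0r; apply: mulr_ge0; [apply: exprn_ge0; rewrite ler0n | exact: ltW].
have hbp : (0 : R) < b%:R by lra.
have hnp : (0 : R) < n%:R by lra.
rewrite /N1.
rewrite -[X in _ <= X]addr0.
have key : b%:R^-2 * (C^-1 * (N2 * T + (b%:R * C / n%:R - N2) * Sg))
   = (b%:R ^+ 2 * C)^-1 * (N2 * T) + (b%:R * n%:R)^-1 * Sg - (b%:R ^+ 2 * C)^-1 * N2 * Sg.
  by field; rewrite ?(gt_eqF hC) ?(gt_eqF hbp) ?(gt_eqF hnp).
rewrite key addr0.
have r : (b%:R ^+ 2 * C)^-1 * N2 <= n%:R ^-2.
  have e1 : (b%:R ^+ 2 * C)^-1 * N2 = (N2 * n%:R ^+ 2) * ((b%:R ^+ 2 * C)^-1 * n%:R ^-2).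
    by field; rewrite ?(gt_eqF hC) ?(gt_eqF hbp) ?(gt_eqF hnp).
  have e2 : n%:R ^-2 = (b%:R ^+ 2 * C) * ((b%:R ^+ 2 * C)^-1 * n%:R ^-2 : R).
    by field; rewrite ?(gt_eqF hC) ?(gt_eqF hbp) ?(gt_eqF hnp).
  rewrite e1 [X in _ <= X]e2; apply: ler_wpM2r => //.
  by rewrite mulr_ge0 // invr_ge0 ?mulr_ge0 ?exprn_ge0 // ltW.
have k1 : (b%:R ^+ 2 * C)^-1 * (N2 * T) <= n%:R ^-2 * T.
  by rewrite mulrA; apply: ler_wpM2r.
have k2 : 0 <= (b%:R ^+ 2 * C)^-1 * N2 * Sg.
  apply: mulr_ge0 => //; apply: mulr_ge0 => //; rewrite invr_ge0; apply: mulr_ge0.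
    by apply: exprn_ge0; rewrite ler0n.
  exact: ltW.
lra.
Qed.

End Moments.

Section Step.
Context {R : realType} {n d : nat} (f : 'I_n -> 'rV[R]_d -> R) (g : 'I_n -> 'rV[R]_d -> 'rV[R]_d) (L : R).
Hypothesis gradfg : is_gradient f g.
Hypothesis smooth : Lsmooth g L.
Variables (b : nat) (lam eta : R) (x0 gI : 'rV[R]_d).
Hypothesis b0 : (0 < b)%N.
Hypothesis bn : (b <= n)%N.
Hypothesis lam01 : 0 < lam < 1.
Hypothesis eta0 : 0 < eta.

Lemma n0' : (0 < n)%N.
Proof. exact: leq_trans b0 bn. Qed.

Lemma Lneg_zero : L < 0 -> forall u : 'rV[R]_d, enorm2 u = 0.
Proof.
move=> hL u; have i : 'I_n := Ordinal n0'.
have := smooth i u 0; rewrite subr0 !enormE => h.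
have s1 := sqrtr_ge0 (enorm2 (g i u - g i 0)); have s2 := sqrtr_ge0 (enorm2 u).
have : Num.sqrt (enorm2 u) = 0 by nra.
move/eqP; rewrite sqrtr_eq0 => h2; apply/le_anti; rewrite h2 enorm2_ge0.
by [].
Qed.

Lemma favg_descent (y h : 'rV[R]_d) :
  favg f (y + h) <= favg f y + dotv (gradf g y) h + L / 2 * enorm2 h.
Proof.
have nz : (n%:R : R) != 0 by rewrite pnatr_eq0 -lt0n n0'.
rewrite /favg /gradf /gradI cardsT card_ord dotvZl dotv_suml sum_setT.
have -> : L / 2 * enorm2 h = n%:R^-1 * \sum_(i < n) (L / 2 * enorm2 h).
  by rewrite sumr_const card_ord mulrnAr -mulrnAl -[n%:R^-1 *+ n]mulr_natr mulVf ?mul1r.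
rewrite -!mulrDr -!big_split /= ler_wpM2l ?invr_ge0 ?ler0n //.
by apply: ler_sum => i _; apply: descent.
Qed.

Definition vdir (S : {set 'I_n}) (y : 'rV[R]_d) :=
  (1 - lam) *: (gradI g S y - gradI g S x0) + lam *: gI.

Lemma step_ineq (y : 'rV[R]_d) :
  avg (subsets n b) (fun S => favg f (y - eta *: vdir S y)) <=
  favg f y - (1 - lam) * (1 - (1 - lam) * L * eta) * eta * enorm2 (gradf g y)
   - eta * dotv (lam *: gI - (1 - lam) *: gradf g x0) (gradf g y)
   + L * eta ^+ 2 * enorm2 (lam *: gI - (1 - lam) *: gradf g x0)
   + (1 - lam) ^+ 2 * eta ^+ 2 * L ^+ 3 / (2 * b%:R) * enorm2 (y - x0).
Proof.
set e := lam *: gI - (1 - lam) *: gradf g x0.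
set a := gradf g y.
set del := fun i => g i y - g i x0.
set al := 1 - lam.
set be := lam *: gI.
have hv : forall S, vdir S y = al *: mean S del + be.
  by move=> S1; rewrite /vdir /mean /gradI /del /al /be sumrB [in RHS]scalerBr.
have hmall : mean [set: 'I_n] del = gradf g y - gradf g x0.
  by rewrite /mean /gradf /gradI /del sumrB scalerBr.
set w := al *: mean [set: 'I_n] del + be.
have hw : w = al *: a + e.
  rewrite /w hmall /e /a /be /al; apply/rowP => j; rewrite !mxE; ring.
have p1 : forall S, favg f (y - eta *: vdir S y) <=
    favg f y - eta * dotv a (vdir S y) + L / 2 * eta ^+ 2 * enorm2 (vdir S y).
  move=> S1; have := favg_descent y (- (eta *: vdir S1 y)).
  by rewrite -/a -scaleNr dotvZr enorm2Z sqrrN mulNr mulrA.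
apply: le_trans (ler_avg (fun S1 _ => p1 S1)) _.
rewrite avgD avgB avg_cst ?cardSb_gt0 // avgZ avgZ.
have m1 : avg (subsets n b) (fun S => dotv a (vdir S y)) = dotv a w.
  rewrite (@avg_eq _ _ _ _ (fun S => al * dotv (mean S del) a + dotv a be)); last first.
    by move=> S1 _; rewrite hv dotvDr dotvZr dotvC.
  rewrite avgD avgZ (mom1 b0 bn) avg_cst ?cardSb_gt0 //.
  by rewrite /w dotvDr (dotvZr al a) (dotvC (mean _ _) a).
set Sg := \sum_i enorm2 (del i).
have m2 : avg (subsets n b) (fun S => enorm2 (vdir S y)) <=
          enorm2 w + al ^+ 2 * ((b%:R * n%:R)^-1 * Sg).
  rewrite (@avg_eq _ _ _ _ (fun S => al ^+ 2 * enorm2 (mean S del) + (2 * al * dotv (mean S del) be + enorm2 be))); last first.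
    by move=> S1 _; rewrite hv enorm2D (enorm2Z al) (dotvZl al); ring.
  rewrite avgD avgZ avgD avgZ (mom1 b0 bn) avg_cst ?cardSb_gt0 //.
  have := mom2 b0 bn del; rewrite -/Sg => hm.
  rewrite /w enorm2D (enorm2Z al) (dotvZl al).
  have hal : 0 <= al ^+ 2 by apply: sqr_ge0.
  have := ler_wpM2l hal hm.
  lra.
have hSg : Sg <= n%:R * (L ^+ 2 * enorm2 (y - x0)).
  have -> : n%:R * (L ^+ 2 * enorm2 (y - x0)) = \sum_(i < n) (L ^+ 2 * enorm2 (y - x0)).
    by rewrite sumr_const card_ord mulr_natl.
  by rewrite /Sg /del; apply: ler_sum => i _; apply: sm_sq.
have hnp : (0 : R) < n%:R by rewrite ltr0n n0'.
have hbp : (0 : R) < b%:R by rewrite ltr0n.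
have hbn : (b%:R * n%:R)^-1 * Sg <= L ^+ 2 * enorm2 (y - x0) / b%:R.
  have e1 : (b%:R * n%:R)^-1 * Sg = b%:R^-1 * (n%:R^-1 * Sg).
    by field; rewrite !gt_eqF.
  have h2 : n%:R^-1 * Sg <= L ^+ 2 * enorm2 (y - x0).
    have hni : 0 <= n%:R^-1 :> R by rewrite invr_ge0 ltW.
    by have := ler_wpM2l hni hSg; rewrite mulKf // gt_eqF.
  rewrite e1 mulrC; apply: ler_wpM2r => //; by rewrite invr_ge0 ltW.
have hw2 : enorm2 w <= 2 * al ^+ 2 * enorm2 a + 2 * enorm2 e.
  rewrite hw enorm2D enorm2Z dotvZl; have := dotv_le (al *: a) e.
  rewrite enorm2Z dotvZl; lra.
have Q : avg (subsets n b) (fun S => enorm2 (vdir S y)) <=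
         2 * al ^+ 2 * enorm2 a + 2 * enorm2 e + al ^+ 2 * (L ^+ 2 * enorm2 (y - x0) / b%:R).
  apply: le_trans m2 _; have hal : 0 <= al ^+ 2 by apply: sqr_ge0.
  have := ler_wpM2l hal hbn; lra.
have dw : dotv a w = al * enorm2 a + dotv e a.
  by rewrite hw dotvDr dotvZr dotvC.
rewrite m1 dw.
case: (ltP L 0) => hL.
  have z := Lneg_zero hL.
  have Q0 : avg (subsets n b) (fun S => enorm2 (vdir S y)) = 0.
    by rewrite (@avg_eq _ _ _ _ (fun _ => 0)) ?avg_cst ?cardSb_gt0 // => S _; apply: z.
  rewrite Q0 !z; lra.
have hL2 : 0 <= L / 2 * eta ^+ 2 by rewrite mulr_ge0 ?divr_ge0 ?sqr_ge0.
have := ler_wpM2l hL2 Q.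
rewrite /al.
have -> : (1 - lam) ^+ 2 * eta ^+ 2 * L ^+ 3 / (2 * b%:R) * enorm2 (y - x0)
  = L / 2 * eta ^+ 2 * ((1 - lam) ^+ 2 * (L ^+ 2 * enorm2 (y - x0) / b%:R)).
  by field; rewrite gt_eqF.
nra.
Qed.

End Step.
Section Batches.
Context {n : nat} (b : nat).
Local Notation FF k := {ffun 'I_k -> {set 'I_n}}.

Definition restr k (s : FF k.+1) : FF k := [ffun j => s (widen_ord (leqnSn k) j)].
Definition join k (t : FF k) (S : {set 'I_n}) : FF k.+1 :=
  [ffun i : 'I_k.+1 => if @insub _ (fun m => (m < k)%N) 'I_k (val i) is Some j then t j else S].

Lemma restr_join k t S : restr (@join k t S) = t.
Proof.
apply/ffunP => j; rewrite !ffunE /=.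
case: insubP => [j' _ ej|]; last by rewrite ltn_ord.
by congr (t _); apply: val_inj; rewrite ej.
Qed.

Lemma join_last k t S : @join k t S ord_max = S.
Proof. by rewrite ffunE; case: insubP => //= j; rewrite ltnn. Qed.

Lemma join_restr k (s : FF k.+1) : join (restr s) (s ord_max) = s.
Proof.
apply/ffunP => i; rewrite !ffunE.
case: insubP => [j _ ej|].
  by rewrite ffunE; congr (s _); apply: val_inj; rewrite /= ej.
rewrite -leqNgt => hi; congr (s _); apply: val_inj => /=.
by apply/eqP; rewrite eqn_leq hi -ltnS ltn_ord.
Qed.

Lemma ext_restr k (s : FF k.+1) m : (m < k)%N -> ext_batches s m = ext_batches (restr s) m.
Proof.
move=> mk; rewrite /ext_batches.
case: insubP => [i _ ei|]; last by rewrite ltnS ltnW.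
case: insubP => [j _ ej|]; last by rewrite mk.
by rewrite ffunE; congr (s _); apply: val_inj; rewrite /= ei ej.
Qed.

Lemma ext_last k (s : FF k.+1) : ext_batches s k = s ord_max.
Proof.
rewrite /ext_batches; case: insubP => [i _ ei|]; last by rewrite ltnSn.
by congr (s _); apply: val_inj; rewrite /= ei.
Qed.

Lemma join_in k t S : (@join k t S \in batches n b k.+1) = (t \in batches n b k) && (S \in subsets n b).
Proof.
rewrite !inE; apply/forallP/andP.
  move=> h; split.
    apply/forallP => j; have := h (widen_ord (leqnSn k) j).
    suff -> : t j = join t S (widen_ord (leqnSn k) j) by [].
    by rewrite -{1}(restr_join t S) ffunE.
  by have := h ord_max; rewrite join_last.
move=> [/forallP ht hS] i; rewrite -(restr_join t S) in ht.
have e := join_restr (join t S); rewrite -e ffunE.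
case: insubP => [j _ _|_]; first by have := ht j; rewrite !ffunE.
by rewrite join_last.
Qed.

Lemma sum_batchesS (V : nmodType) k (F : FF k.+1 -> V) :
  \sum_(s in batches n b k.+1) F s =
  \sum_(t in batches n b k) \sum_(S in subsets n b) F (join t S).
Proof.
rewrite pair_big_dep /=.
rewrite (reindex (fun p : FF k * {set 'I_n} => join p.1 p.2)) /=; last first.
  exists (fun s => (restr s, s ord_max)) => [[t S] _|s _] /=.
    by rewrite restr_join join_last.
  by rewrite join_restr.
by apply: eq_bigl => -[t S]; rewrite join_in.
Qed.

Lemma card_batches k : #|batches n b k| = (#|subsets n b| ^ k)%N.
Proof.
elim: k => [|k IH].
  rewrite expn0; apply/eqP/cards1P; exists [ffun i : 'I_0 => finset.set0].
  apply/setP => s; rewrite !inE; apply/idP/idP => [_|_].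
    by apply/eqP/ffunP => -[].
  by apply/forallP => -[].
rewrite -sum1_card (@sum_batchesS nat) /=.
under eq_bigr do rewrite sum1_card.
by rewrite sum_nat_const expnS mulnC IH.
Qed.
End Batches.
Section Ser.
Context {R : realType}.
Implicit Types u v : nat -> R.

Lemma serD u v : cvgn (series u) -> cvgn (series v) ->
  cvgn (series (fun k => u k + v k)) /\
  limn (series (fun k => u k + v k)) = limn (series u) + limn (series v).
Proof.
move=> cu cv; have e : (fun k => u k + v k) = u + v by [].
rewrite e; split; [exact: is_cvg_seriesD | exact: lim_seriesD].
Qed.

Lemma serZ (a : R) u : cvgn (series u) ->
  cvgn (series (fun k => a * u k)) /\
  limn (series (fun k => a * u k)) = a * limn (series u).
Proof.
move=> cu; have e : (fun k => a * u k) = a *: u by [].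
rewrite e; split; [exact: is_cvg_seriesZ | exact: lim_seriesZ].
Qed.

Lemma ser_cmp u v : (forall k, `|u k| <= v k) -> cvgn (series v) -> cvgn (series u).
Proof.
move=> h cv; apply: normed_cvg.
apply: (@series_le_cvg _ _ v) => // k; last by apply: le_trans (h k).
exact: normr_ge0.
Qed.

Lemma ser_shift u : cvgn (series u) ->
  cvgn (series (fun k => u k.+1)) /\
  limn (series (fun k => u k.+1)) = limn (series u) - u 0%N.
Proof.
move=> cu.
have e : series (fun k => u k.+1) = (fun m => series u m.+1 - u 0%N).
  apply: funext => m; rewrite /series /= big_nat_recl // addrC addKr.
  by apply: eq_bigr.
have h1 : ((fun m => series u m.+1) @ \oo --> limn (series u))%classic.
  by rewrite (cvg_shiftS (series u)).
have h2 : ((fun m => series u m.+1 - u 0%N) @ \oo --> limn (series u) - u 0%N)%classic.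
  exact: cvgB h1 (cvg_cst _).
rewrite e; split; [exact: (cvgP _ h2) | exact: (cvg_lim _ h2)].
Qed.

Lemma ser_lin4 (a1 a2 a3 a4 : R) u1 u2 u3 u4 :
  cvgn (series u1) -> cvgn (series u2) -> cvgn (series u3) -> cvgn (series u4) ->
  cvgn (series (fun k => a1 * u1 k + (a2 * u2 k + (a3 * u3 k + a4 * u4 k)))) /\
  limn (series (fun k => a1 * u1 k + (a2 * u2 k + (a3 * u3 k + a4 * u4 k)))) =
  a1 * limn (series u1) + (a2 * limn (series u2) + (a3 * limn (series u3) + a4 * limn (series u4))).
Proof.
move=> c1 c2 c3 c4.
have e : (fun k => a1 * u1 k + (a2 * u2 k + (a3 * u3 k + a4 * u4 k))) =
  a1 *: u1 + (a2 *: u2 + (a3 *: u3 + a4 *: u4)) by [].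
have z1 := is_cvg_seriesZ (k:=a1) c1; have z2 := is_cvg_seriesZ (k:=a2) c2.
have z3 := is_cvg_seriesZ (k:=a3) c3; have z4 := is_cvg_seriesZ (k:=a4) c4.
have d34 := is_cvg_seriesD z3 z4; have d234 := is_cvg_seriesD z2 d34.
rewrite e; split; first exact: is_cvg_seriesD z1 d234.
rewrite lim_seriesD // lim_seriesD // lim_seriesD //.
by rewrite !lim_seriesZ.
Qed.

Lemma ser_lin2 (a1 a2 : R) u1 u2 :
  cvgn (series u1) -> cvgn (series u2) ->
  cvgn (series (fun k => a1 * u1 k + a2 * u2 k)) /\
  limn (series (fun k => a1 * u1 k + a2 * u2 k)) = a1 * limn (series u1) + a2 * limn (series u2).
Proof.
move=> c1 c2.
have e : (fun k => a1 * u1 k + a2 * u2 k) = a1 *: u1 + a2 *: u2 by [].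
have z1 := is_cvg_seriesZ (k:=a1) c1; have z2 := is_cvg_seriesZ (k:=a2) c2.
rewrite e; split; first exact: is_cvg_seriesD z1 z2.
by rewrite lim_seriesD // !lim_seriesZ.
Qed.
End Ser.

Lemma iter_ext {R : realType} {n d : nat} (g : 'I_n -> 'rV[R]_d -> 'rV[R]_d) lam eta x0 gI
  (s s' : nat -> {set 'I_n}) k :
  (forall m, (m < k)%N -> s m = s' m) ->
  svrg_iter g lam eta x0 gI s k = svrg_iter g lam eta x0 gI s' k.
Proof.
elim: k => [//|k IH] h /=.
rewrite IH ?h // => m mk; apply: h; exact: ltnW.
Qed.

Lemma iter_join {R : realType} {n d : nat} (g : 'I_n -> 'rV[R]_d -> 'rV[R]_d) lam eta x0 gI k
  (t : {ffun 'I_k -> {set 'I_n}}) (S : {set 'I_n}) :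
  svrg_iter g lam eta x0 gI (ext_batches (join t S)) k.+1 =
  svrg_iter g lam eta x0 gI (ext_batches t) k
   - eta *: vdir g lam x0 gI S (svrg_iter g lam eta x0 gI (ext_batches t) k).
Proof.
have E : svrg_iter g lam eta x0 gI (ext_batches (join t S)) k =
         svrg_iter g lam eta x0 gI (ext_batches t) k.
  apply: iter_ext => m mk; rewrite ext_restr // restr_join //.
rewrite /= E ext_last join_last.
by [].
Qed.

Lemma avg_batchesS {R : realType} {n : nat} (b k : nat) (F : {ffun 'I_k.+1 -> {set 'I_n}} -> R) :
  avg (batches n b k.+1) F = avg (batches n b k) (fun t => avg (subsets n b) (fun S => F (join t S))).
Proof.
rewrite /avg sum_batchesS card_batches expnS natrM invfM -card_batches.
rewrite -[in RHS]mulr_sumr; ring.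
Qed.

Lemma avg_lin {R : realType} {T : finType} (A : {set T}) (F1 F2 F3 F4 F5 : T -> R) (a1 a2 a3 a4 : R) :
  avg A (fun x => F1 x - a1 * F2 x - a2 * F3 x + a3 * F4 x + a4 * F5 x)
  = avg A F1 - a1 * avg A F2 - a2 * avg A F3 + a3 * avg A F4 + a4 * avg A F5.
Proof. by rewrite avgD avgD avgB avgB !avgZ. Qed.

Lemma avg_cstB {R : realType} {T : finType} (A : {set T}) (c : R) (F : T -> R) :
  (0 < #|A|)%N -> avg A (fun x => c - F x) = c - avg A F.
Proof. by move=> A0; rewrite avgB avg_cst. Qed.

Theorem lemmaB8 (R : realType) (n d : nat)
  (f : 'I_n -> 'rV[R]_d -> R) (g : 'I_n -> 'rV[R]_d -> 'rV[R]_d) (L : R)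
  (B b : nat) (lam eta : R) (x0 : 'rV[R]_d) :
  is_gradient f g -> Lsmooth g L ->
  (0 < B <= n)%N -> (0 < b <= n)%N ->
  0 < lam < 1 -> 0 < eta -> eta * L < 1 ->
  let xt := fun I N s => svrg_iter g lam eta x0 (gradI g I x0) s N in
  let e := fun I => lam *: gradI g I x0 - (1 - lam) *: gradf g x0 in
  let A := fun I N s => enorm2 (gradf g (xt I N s)) in
  let C := fun I N s => dotv (e I) (gradf g (xt I N s)) in
  let D := fun I N s => favg f x0 - favg f (xt I N s) in
  let G := fun I N s => enorm2 (xt I N s - x0) in
  let H := fun I (N : nat) (s : nat -> {set 'I_n}) => enorm2 (e I) in
  Eint B b A -> Eint B b C -> Eint B b D -> Eint B b G -> Eint B b H ->
  (1 - lam) * (1 - (1 - lam) * L * eta) * eta * B%:R * Eepoch B b A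
    + eta * B%:R * Eepoch B b C
  <= b%:R * Eepoch B b D
     + (1 - lam) ^+ 2 * eta ^+ 2 * B%:R * L ^+ 3 / (2 * b%:R) * Eepoch B b G
     + L * eta ^+ 2 * B%:R * Eepoch B b H.
Proof.
move=> gradfg smooth /andP[B0 Bn] /andP[b0 bn] lam01 eta0 etaL.
intros xt e A C D G H hA hC hD hG hH.
pose c := (1 - lam) * (1 - (1 - lam) * L * eta) * eta.
pose ka := (1 - lam) ^+ 2 * eta ^+ 2 * L ^+ 3 / (2 * b%:R).
pose gam : R := B%:R / (B + b)%:R.
have hBp : (0 : R) < B%:R by rewrite ltr0n.
have hbp : (0 : R) < b%:R by rewrite ltr0n.
have hBb : (0 : R) < (B + b)%:R by rewrite ltr0n addn_gt0 B0.
have gam0 : 0 < gam by rewrite divr_gt0.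
have gam1 : gam <= 1 by rewrite ler_pdivrMr // mul1r ler_nat leq_addr.
have gp0 : forall k, 0 <= geomp R B b k.
  by move=> k; rewrite /geomp -/gam mulr_ge0 ?subr_ge0 // exprn_ge0 // ltW.
have gpS : forall k, geomp R B b k.+1 = gam * geomp R B b k.
  by move=> k; rewrite /geomp -/gam exprS; ring.
have gp00 : geomp R B b 0 = 1 - gam by rewrite /geomp expr0 mulr1.
pose S (F : {set 'I_n} -> nat -> (nat -> {set 'I_n}) -> R) I :=
  limn (series (fun k => geomp R B b k * avg (batches n b k) (fun s => F I k (ext_batches s)))).
have EE : forall F, Eepoch B b F = avg (subsets n B) (S F) by [].
have key : forall I, I \in subsets n B ->
  c * B%:R * S A I + eta * B%:R * S C I <=
  b%:R * S D I + ka * B%:R * S G I + L * eta ^+ 2 * B%:R * S H I.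
  move=> I HI.
  pose m (F : {set 'I_n} -> nat -> (nat -> {set 'I_n}) -> R) k :=
    avg (batches n b k) (fun s => F I k (ext_batches s)).
  have Bk0 : forall k, (0 < #|batches n b k|)%N.
    by move=> k; rewrite card_batches expn_gt0 (cardSb_gt0 bn).
  pose y k (t : {ffun 'I_k -> {set 'I_n}}) := xt I k (ext_batches t).
  have SK : forall k, c * m A k + eta * m C k - L * eta ^+ 2 * m H k - ka * m G k
                      <= m D k.+1 - m D k.
    move=> k.
    have h1 : m D k.+1 = favg f x0 - avg (batches n b k.+1) (fun s => favg f (xt I k.+1 (ext_batches s))).
      by rewrite /m /D avg_cstB.
    have h1' : m D k = favg f x0 - avg (batches n b k) (fun t => favg f (y k t)).
      by rewrite /m /D avg_cstB.
    have h2 : avg (batches n b k.+1) (fun s => favg f (xt I k.+1 (ext_batches s))) =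
      avg (batches n b k) (fun t => avg (subsets n b)
         (fun S0 => favg f (y k t - eta *: vdir g lam x0 (gradI g I x0) S0 (y k t)))).
      rewrite avg_batchesS; apply: avg_eq => t _; apply: avg_eq => S0 _.
      by rewrite /xt /y iter_join.
    have h3 := ler_avg (fun t (_ : t \in batches n b k) =>
        step_ineq gradfg smooth lam eta x0 (gradI g I x0) b0 bn (y k t)).
    rewrite avg_lin in h3.
    have eA : m A k = avg (batches n b k) (fun t => enorm2 (gradf g (y k t))) by [].
    have eC : m C k = avg (batches n b k) (fun t => dotv (lam *: gradI g I x0 - (1 - lam) *: gradf g x0) (gradf g (y k t))) by [].
    have eH : m H k = avg (batches n b k) (fun t => enorm2 (lam *: gradI g I x0 - (1 - lam) *: gradf g x0)) by [].
    have eG : m G k = avg (batches n b k) (fun t => enorm2 (y k t - x0)) by [].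
    rewrite h1 h1' h2 eA eC eH eG /c /ka.
    move: h3; lra.
  have cv : forall F, Eint B b F -> cvgn (series (fun k => geomp R B b k * m F k)).
    move=> F hF; apply: (ser_cmp _ (hF I HI)) => k.
    rewrite normrM ger0_norm // ler_wpM2l //; exact: avg_norm.
  have mD0 : m D 0%N = 0.
    rewrite /m (@avg_eq _ _ _ _ (fun _ => 0)); last by move=> s _; rewrite /D /xt /= subrr.
    by rewrite /avg big1 ?mulr0.
  have [cw lw] := ser_lin4 c eta (- (L * eta ^+ 2)) (- ka) (cv A hA) (cv C hC) (cv H hH) (cv G hG).
  have [cs ls] := ser_shift (cv D hD).
  have [cz lz] := ser_lin2 (gam^-1) (-1) cs (cv D hD).
  have hle := lim_series_le cw cz.
  have gnz : gam != 0 by rewrite gt_eqF.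
  have pw : forall k,
    c * (geomp R B b k * m A k) + (eta * (geomp R B b k * m C k) +
      (- (L * eta ^+ 2) * (geomp R B b k * m H k) + - ka * (geomp R B b k * m G k)))
    <= gam^-1 * (geomp R B b k.+1 * m D k.+1) + -1 * (geomp R B b k * m D k).
    move=> k; have := ler_wpM2l (gp0 k) (SK k).
    have e1 : c * (geomp R B b k * m A k) + (eta * (geomp R B b k * m C k) +
      (- (L * eta ^+ 2) * (geomp R B b k * m H k) + - ka * (geomp R B b k * m G k)))
      = geomp R B b k * (c * m A k + eta * m C k - L * eta ^+ 2 * m H k - ka * m G k) by ring.
    have e2 : gam^-1 * (geomp R B b k.+1 * m D k.+1) + -1 * (geomp R B b k * m D k)
      = geomp R B b k * (m D k.+1 - m D k).
      by rewrite gpS; field.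
    by rewrite e1 e2.
  have := hle pw; rewrite lw lz ls mD0 mulr0 subr0 => h.
  have eS : forall F, S F I = limn (series (fun k => geomp R B b k * m F k)) by [].
  rewrite !eS.
  have gi : B%:R * (gam^-1 * limn (series (fun k => geomp R B b k * m D k)) +
             -1 * limn (series (fun k => geomp R B b k * m D k)))
          = b%:R * limn (series (fun k => geomp R B b k * m D k)).
    rewrite /gam invf_div natrD; field; by rewrite gt_eqF.
  have := ler_wpM2l (ltW hBp) h; rewrite gi.
  lra.
rewrite !EE.
have := ler_avg key.
rewrite !avgD !avgZ /c /ka => h.
lra.
Qed.
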